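(* Let $q$ be a prime, $A$ a group of exponent $q$ and order $q^3$, and $B$ a subgroup of order $q$ of $Z(A)$. Suppose $A$ acts by automorphisms on a finite group $G$ of order coprime to $q$ with $G=PH$, where $P$ and $H$ are $A$-invariant subgroups, $P$ is a normal $p$-subgroup of $G$ for a prime $p$, and $H$ is a nilpotent $p'$-subgroup. If $P$ is abelian, then $[P,C_H(B)]$ is contained in $\prod_{a\in A^{\#}}[C_P(a),C_H(a)]$.
   Context: $A^{\#}$ is the set of nontrivial elements of $A$; $C_X(Y)$ denotes the fixed points in $X$ of $Y$; $[X,Y]$ is the subgroup generated by commutators $[x,y]$, $x\in X$, $y\in Y$. *)

(* Defs.v *)
From mathcomp Require Import all_boot all_fingroup all_solvable.
Set Implicit Arguments.
Unset Strict Implicit.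
Unset Printing Implicit Defensive.

(* Main.v *)
Require Import Defs.
From mathcomp Require Import all_boot all_fingroup all_solvable.
From mathcomp Require Import ssralg.
Set Implicit Arguments.
Unset Strict Implicit.
Unset Printing Implicit Defensive.
Import GroupScope.
Import FiniteModule.

Section AbGen.
Variables (gT : finGroupType) (Y : {group gT}) (abY : abelian Y).
Local Notation fm := (fmod_of abY).

Lemma actrM (v : fm) a b : a \in 'N(Y) -> b \in 'N(Y) ->
  actr (actr v a) b = actr v (a * b).
Proof. by move=> Na Nb; rewrite (actMin (actr_action abY) v Na Nb). Qed.

Lemma actr1 (v : fm) : actr v 1 = v.
Proof. exact: (act1 (actr_action abY)). Qed.

Definition tr (g : gT) (q : nat) (v : fm) := (\sum_(k < q) actr v (g ^+ k))%R.

Lemma tr_fix g q v : 0 < q -> g \in 'N(Y) -> g ^+ q = 1 -> actr (tr g q v) g = tr g q v.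
Proof.
move=> q0 Ng gq; rewrite /tr actr_sum.
under eq_bigr => k _ do rewrite actrM ?groupX // -expgSr.
case: q q0 gq => // q _ gq.
rewrite big_ord_recr big_ord_recl /= gq expg0 GRing.addrC; congr (_ + _)%R.

Qed.

Lemma tr_cent g q v : 0 < q -> g \in 'N(Y) -> g ^+ q = 1 -> val (tr g q v) \in 'C_Y[g].
Proof.
move=> q0 Ng gq; rewrite inE fmodP; apply/cent1P/commgP/conjg_fixP.
by rewrite -fmvalJ // tr_fix.
Qed.

Lemma val_sum_in (W : {group gT}) I (r : seq I) (P : pred I) (F : I -> fm) :
  (forall i, P i -> fmval (F i) \in W) -> fmval (\sum_(i <- r | P i) F i)%R \in W.
Proof. by move=> HF; rewrite fmval_sum; apply: group_prod. Qed.


Lemma sum_ord_split (F : nat -> fm) q : 0 < q ->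
  (\sum_(k < q) F k = F 0%N + \sum_(k < q.-1) F k.+1)%R.
Proof. by case: q => // q _; rewrite big_ord_recl. Qed.

Definition gens (X : {set gT}) (e1 e2 : gT) (q : nat) : {set gT} :=
  \bigcup_(e in e1 |: [set e2 * e1 ^+ i | i : 'I_q]) 'C_X[e].

Lemma abel_gen e1 e2 q : prime q -> e1 \in 'N(Y) -> e2 \in 'N(Y) ->
  commute e1 e2 -> e1 ^+ q = 1 -> e2 ^+ q = 1 -> coprime #|Y| q ->
  Y \subset <<gens Y e1 e2 q>>.
Proof.
move=> pq N1 N2 c12 e1q e2q coYq.
have q0 : 0 < q := prime_gt0 pq.
set W := <<_>>.
have CW : forall e, e \in e1 |: [set e2 * e1 ^+ i | i : 'I_q] -> 'C_Y[e] \subset W.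
  by move=> e Se; apply: sub_gen; apply/subsetP => x Cx; apply/bigcupP; exists e.
apply/subsetP=> y Yy.
pose u := fmod abY y.
have key0 : (\sum_(i < q) tr (e2 * e1 ^+ i) q u = u *+ q + \sum_(k < q.-1) tr (e1 ^+ k.+1) q (actr u (e2 ^+ k.+1)))%R.
  rewrite /tr.
  under eq_bigr => i _ do under eq_bigr => k _ do rewrite (expgMn _ (commuteX i (esym c12))) expgnAC -actrM ?groupX //.
  rewrite exchange_big /=.
  rewrite (sum_ord_split (fun k => \sum_(i < q) actr (actr u (e2 ^+ k)) ((e1 ^+ k) ^+ i))%R q0).
  congr (_ + _)%R.
  rewrite expg0 actr1.
  under eq_bigr => i _ do rewrite expg1n actr1.
  by rewrite GRing.sumr_const card_ord.
have key : (u *+ q = \sum_(i < q) tr (e2 * e1 ^+ i) q u - \sum_(k < q.-1) tr (e1 ^+ k.+1) q (actr u (e2 ^+ k.+1)))%R.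
  by rewrite key0 GRing.addrK.
have : fmval (u *+ q)%R \in W.
  rewrite key fmvalA fmvalN groupM ?groupV //; apply: val_sum_in => i _.
    apply: (subsetP (CW _ _)); first by apply/setU1P; right; apply/imsetP; exists i.
    apply: tr_cent => //; first by rewrite groupM ?groupX.
    by rewrite (expgMn _ (commuteX i (esym c12))) e2q expgnAC e1q expg1n mulg1.
  apply: (subsetP (CW e1 _)); first exact: setU11.
  have h : (e1 ^+ i.+1) ^+ q = 1 by rewrite expgnAC e1q expg1n.
  have := tr_cent (actr u (e2 ^+ i.+1)) q0 (groupX i.+1 N1) h.
  have gen : generator <[e1]> (e1 ^+ i.+1).
    rewrite generator_coprime (coprime_dvdl (_ : #[e1] %| q)) ?order_dvdn ?e1q //.
    rewrite prime_coprime // gtnNdvd //.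
    by have := ltn_ord i; rewrite -ltnS prednK.
  by rewrite -!cent_cycle -(eqP gen).
rewrite fmvalZ fmodK // => Wyq.
by rewrite -(expgK coYq Yy) groupX.
Qed.
End AbGen.

Lemma sol_gen n : forall (gT : finGroupType) (X : {group gT}) (e1 e2 : gT) q,
  #|X| <= n -> prime q -> e1 \in 'N(X) -> e2 \in 'N(X) ->
  commute e1 e2 -> e1 ^+ q = 1 -> e2 ^+ q = 1 -> coprime #|X| q -> solvable X ->
  X \subset <<gens X e1 e2 q>>.
Proof.
elim: n => [|n IH] gT X e1 e2 q leXn pq N1 N2 c12 e1q e2q coXq solX.
  by move: leXn; rewrite leqn0 -(prednK (cardG_gt0 X)).
case abX: (abelian X); first exact: abel_gen.
have ntX : X :!=: 1 by apply: contraFN abX => /eqP ->; apply: abelian1.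
pose V := (X^`(1))%G.
have prV : V \proper X := sol_der1_proper solX (subxx X) ntX.
have sVX := proper_sub prV.
have nVN : 'N(X) \subset 'N(V) := char_norms (der_char 1 X).
have N1V := subsetP nVN _ N1; have N2V := subsetP nVN _ N2.
have nVX : X \subset 'N(V) := normal_norm (der_normal 1 X).
have IHV : V \subset <<gens V e1 e2 q>>.
  apply: IH => //; first by rewrite -ltnS (leq_trans (proper_card prV)).
    exact: coprimeSg coXq.
  exact: solvableS solX.
have sgV : <<gens V e1 e2 q>> \subset <<gens X e1 e2 q>>.
  apply: genS; apply/subsetP => x /bigcupP[e Se Cx]; apply/bigcupP; exists e => //.
  by move: Cx; rewrite !inE => /andP[Vx ->]; rewrite (subsetP sVX).
have abXV : abelian (X / V) := sub_der1_abelian (subxx _).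
have Nq : forall e, e \in 'N(X) -> coset V e \in 'N(X / V).
  move=> e Ne; have sN : <[e]> \subset 'N(X) by rewrite cycle_subG.
  by apply: (subsetP (quotient_norms V sN)); rewrite mem_quotient ?cycle_id.
have cb : commute (coset V e1) (coset V e2).
  by rewrite /commute -!morphM // c12.
have eb1 : (coset V e1) ^+ q = 1 by rewrite -morphX // e1q morph1.
have eb2 : (coset V e2) ^+ q = 1 by rewrite -morphX // e2q morph1.
have coXVq : coprime #|X / V| q.
  by rewrite (coprime_dvdl _ coXq) // card_quotient // dvdn_indexg.
have := abel_gen abXV pq (Nq _ N1) (Nq _ N2) cb eb1 eb2 coXVq.
have qc : forall e, e \in 'N(V) -> e ^+ q = 1 -> 'C_(X / V)[coset V e] = 'C_X[e] / V.
  move=> e Ne eq; rewrite -!cent_cycle -quotient_cycle // coprime_quotient_cent //.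
    by rewrite cycle_subG.
  by rewrite (coprime_dvdr _ coXq) // order_dvdn eq.
have sg : gens X e1 e2 q \subset 'N(V).
  by apply/bigcupsP => e _; apply: subset_trans (subsetIl _ _) nVX.
have : <<gens (X / V) (coset V e1) (coset V e2) q>> \subset <<gens X e1 e2 q>> / V.
  rewrite quotient_gen //; apply: genS; apply/bigcupsP => eb.
  case/setU1P => [-> | /imsetP[i _ ->]].
    rewrite qc //; apply: quotientS; apply/subsetP => x Cx; apply/bigcupP; exists e1 => //.
    exact: setU11.
  have Ne : e2 * e1 ^+ i \in 'N(V) by rewrite groupM ?groupX.
  rewrite -morphX // -morphM ?groupX // qc //.
    apply: quotientS; apply/subsetP => x Cx; apply/bigcupP; exists (e2 * e1 ^+ i) => //.
    by apply/setU1P; right; apply/imsetP; exists i.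
  by rewrite (expgMn _ (commuteX i (esym c12))) e2q expgnAC e1q expg1n mulg1.
move=> sub1 sub2; have := subset_trans sub2 sub1.
rewrite quotientSK // => sXV; apply: subset_trans sXV _.
by apply: mul_subG => //; apply: subset_trans IHV sgV.
Qed.

Theorem lemma2p4 (gT : finGroupType) (q p : nat) (A B G P H : {group gT}) :
  prime q -> #|A| = (q ^ 3)%N -> exponent A = q ->
  B \subset 'Z(A) -> #|B| = q ->
  A \subset 'N(G) -> coprime #|G| q ->
  P * H = G -> A \subset 'N(P) -> A \subset 'N(H) ->
  prime p -> P <| G -> p.-group P ->
  nilpotent H -> p^'.-group H ->
  abelian P ->
  [~: P, 'C_H(B)] \subset << \bigcup_(a in A^#) [~: 'C_P[a], 'C_H[a]] >>.
Proof.
move=> pq oA expA sBZ oB nGA coGq defG nPA nHA pp nPG pP nilH p'H abP.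
set N := <<_>>.
have sHG : H \subset G by rewrite -defG mulG_subr.
have sPG : P \subset G by rewrite -defG mulG_subl.
have nPH : H \subset 'N(P) := subset_trans sHG (normal_norm nPG).
have q0 := prime_gt0 pq.
have sBA : B \subset A := subset_trans sBZ (center_sub A).
have cBA : A \subset 'C(B).
  by rewrite centsC; apply: subset_trans sBZ (subsetIr _ _).
have expq : forall x, x \in A -> x ^+ q = 1 by move=> x Ax; rewrite -expA expg_exponent.
have [b defB] : exists b, B :=: <[b]> by apply/cyclicP/prime_cyclic; rewrite oB.
have Bb : b \in B by rewrite defB cycle_id.
have Ab := subsetP sBA b Bb.
have ntb : b != 1.
  apply/eqP => b1; move: oB; rewrite defB b1 cycle1 cards1 => q1.
  by rewrite -q1 in pq.
have sNP : N \subset P.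
  rewrite gen_subG; apply/bigcupsP => a _.
  apply: subset_trans (commgSS (subsetIl _ _) (subsetIl _ _)) _.
  by rewrite commg_subl.
have step1 : forall a k u, a \in A -> a \notin B -> k \in H -> k \in 'C(B) ->
    commute k a -> u \in P -> [~ u, k] \in N.
  move=> a k u Aa aB Hk cBk cka Pu.
  have Na := subsetP nPA a Aa; have Nb := subsetP nPA b Ab.
  have cab : commute a b := centP (subsetP cBA a Aa) b Bb.
  have ckb : commute k b := centP cBk b Bb.
  have genP := abel_gen abP pq Nb Na (esym cab) (expq b Ab) (expq a Aa) (coprimeSg sPG coGq).
  pose S := [set v in P | [~ v, k] \in N].
  have gS : group_set S.
    apply/group_setP; split; first by rewrite inE group1 comm1g group1.
    move=> v w; rewrite !inE => /andP[Pv Nv] /andP[Pw Nw]; rewrite groupM //= commMgJ.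
    have Pvk : [~ v, k] \in P.
      by rewrite commgEl groupM ?groupV // memJ_norm // (subsetP nPH).
    have -> : [~ v, k] ^ w = [~ v, k].
      by apply/conjg_fixP/commgP; apply: (centsP abP).
    by rewrite groupM.
  have sPS : P \subset S.
    apply: subset_trans genP _; rewrite -(gen_set_id gS); apply: genS.
    apply/bigcupsP => e Se; apply/subsetP => v Cv.
    have [Pv cve] : v \in P /\ v \in 'C[e] by move: Cv; rewrite inE => /andP[].
    rewrite inE Pv /=.
    have [Ae nte] : e \in A /\ e != 1.
      case/setU1P: Se => [-> | /imsetP[i _ ->]]; first by [].
      rewrite groupM ?groupX //; split=> //; apply: contraNneq aB => e1.
      by rewrite -(mulgK (b ^+ i) a) e1 mul1g groupV groupX.
    have cke : commute k e.
      case/setU1P: Se => [-> | /imsetP[i _ ->]] //.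
      by apply: commuteM => //; apply: commuteX.
    apply: mem_gen; apply/bigcupP; exists e; first by rewrite !inE nte Ae.
    by apply: mem_commg; rewrite // inE Hk; apply/cent1P.
  by have := subsetP sPS u Pu; rewrite inE => /andP[_ ->].
pose T := [set k in 'N(P) | [forall u in P, [~ u, k] \in N]].
have gT' : group_set T.
  apply/group_setP; split.
    apply/setIdP; split; first exact: group1.
    by apply/forall_inP => u _; rewrite commg1 group1.
  move=> k l /setIdP[Nk /forall_inP Tk] /setIdP[Nl /forall_inP Tl].
  apply/setIdP; split; first by rewrite groupM.
  apply/forall_inP => u Pu.
  rewrite commgMJ conjg_mulR groupM ?Tl // groupM ?Tk //.
  by apply: Tl; rewrite (subsetP sNP) ?Tk.
pose TG := Group gT'.
have memT : forall k, k \in TG -> forall u, u \in P -> [~ u, k] \in N.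
  by move=> k /setIdP[_ /forall_inP].
suff sKT : 'C_H(B) \subset TG.
  rewrite /commg gen_subG; apply/subsetP => _ /imset2P[u k Pu Kk ->].
  exact: memT (subsetP sKT k Kk) u Pu.
set K := 'C_H(B).
have sKH : K \subset H := subsetIl _ _.
have cKB : K \subset 'C(B) := subsetIr _ _.
have nBA : A \subset 'N(B) := subset_trans cBA (cent_sub B).
have nBK : K \subset 'N(B) := subset_trans cKB (cent_sub B).
have nKA : A \subset 'N(K) by rewrite normsI // norms_cent.
have coKq : coprime #|K| q := coprimeSg (subset_trans sKH sHG) coGq.
have tiKB : K :&: B = 1 by apply: coprime_TIg; rewrite oB.
have oAB : #|A / B| = (q ^ 2)%N.
  rewrite card_quotient //; apply/eqP; rewrite -(eqn_pmul2l q0).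
  by rewrite -{1}oB Lagrange // oA.
have abAB : abelian (A / B) := card_p2group_abelian pq oAB.
have expAB : forall z, z \in A / B -> z ^+ q = 1.
  move=> z Az; rewrite -expA; apply/eqP; rewrite -order_dvdn.
  exact: dvdn_trans (dvdn_exponent Az) (exponent_quotient A B).
have [x Ax ntx] : exists2 x, x \in A / B & x != 1.
  apply/trivgPn; apply: contraTneq (prime_gt1 pq) => AB1.
  have : #|A / B| = 1%N by rewrite AB1 cards1.
  by rewrite oAB => /eqP; rewrite -mulnn muln_eq1 andbb => /eqP ->.
have [y Ay xy] : exists2 y, y \in A / B & y \notin <[x]>.
  apply/subsetPn; apply: contraTN (prime_gt1 pq) => sAx.
  have := subset_leq_card sAx; rewrite oAB -orderE.
  have := dvdn_leq q0 (_ : #[x] %| q).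
  have dx : #[x] %| q by rewrite order_dvdn expAB.
  move=> /(_ dx) le1 le2; rewrite -leqNgt -(leq_pmul2l q0) muln1 mulnn.
  exact: leq_trans le2 le1.
have solKB : solvable (K / B) := quotient_sol _ (nilpotent_sol (nilpotentS sKH nilH)).
have nKBx : forall z, z \in A / B -> z \in 'N(K / B).
  by move=> z Az; apply: (subsetP (quotient_norms B nKA)).
have coKBq : coprime #|K / B| q.
  by rewrite (coprime_dvdl _ coKq) // card_quotient // dvdn_indexg.
have cxy : commute x y := (centsP abAB) x Ax y Ay.
have genK := @sol_gen #|K / B| _ [group of K / B] x y q (leqnn _) pq (nKBx _ Ax) (nKBx _ Ay)
   cxy (expAB _ Ax) (expAB _ Ay) coKBq solKB.
have key : forall e, e \in A / B -> e != 1 -> 'C_(K / B)[e] \subset (K :&: TG) / B.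
  move=> e Ae nte; apply/subsetP => w /setIP[Kw /cent1P cwe].
  case/morphimP: Kw cwe => k Nk Kk -> cwe.
  case/morphimP: Ae nte cwe => a Na Aa -> nte cwe.
  have aB : a \notin B.
    by move: nte; apply: contraNN => Ba; apply/eqP; apply: coset_id.
  have [Hk cBk] : k \in H /\ k \in 'C(B) by move: Kk; rewrite inE => /andP[].
  have cka : commute k a.
    have : [~ k, a] \in K :&: B.
      apply/setIP; split.
        by rewrite commgEl groupM ?groupV // memJ_norm // (subsetP nKA).
      apply: coset_idr; first by rewrite groupR.
      by rewrite morphR //; apply/eqP/commgP.
    by rewrite tiKB inE => /commgP.
  apply: mem_quotient; apply/setIP; split => //.
  apply/setIdP; split; first exact: (subsetP nPH).
  by apply/forall_inP => u Pu; apply: step1 Aa aB Hk cBk cka Pu.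
have sKTB : K / B \subset (K :&: TG) / B.
  apply: subset_trans genK _; rewrite gen_subG; apply/bigcupsP => e Se.
  have [Ae nte] : e \in A / B /\ e != 1.
    case/setU1P: Se => [-> // | /imsetP[i _ ->]].
    rewrite groupM ?groupX //; split=> //; apply: contraNneq xy => e1.
    by rewrite -(mulgK (x ^+ i) y) e1 mul1g groupV mem_cycle.
  exact: key.
move: sKTB; rewrite quotientSK // => sK.
apply/subsetP => k Kk; have := subsetP sK k Kk.
case/mulsgP => b' t Bb' /setIP[Kt Tt] defk.
have : b' \in K :&: B.
  rewrite inE Bb' andbT (_ : b' = k * t^-1) ?groupM ?groupV //.
  by rewrite defk mulgK.
by rewrite tiKB inE => /eqP b'1; rewrite defk b'1 mul1g.
Qed.
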